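(* Let $t,m$ be positive integers. Then for all non-negative integers $n$, \[ p_{mt,t}(n)= p(n)+\sum_{r=1}^{\infty}p\big(n-tr(2rm-m+2)\big)-\sum_{s=1}^{\infty}p\big(n-t(2s-1)(sm-m+1)\big). \]
   Context: $p(n)$ denotes the number of partitions of $n$ (non-increasing sequences of positive integers summing to $n$), with $p(0)=1$ and the convention $p(n)=0$ for negative integers $n$. For positive integers $A$ and $a$, and a partition $\lambda$, $\mathrm{mex}_{A,a}(\lambda)$ is the smallest positive integer congruent to $a$ modulo $A$ that is not a part of $\lambda$; $p_{A,a}(n)$ is the number of partitions $\lambda$ of $n$ with $\mathrm{mex}_{A,a}(\lambda)\equiv a\pmod{2A}$. *)

(* Defs.v *)
From mathcomp Require Import all_boot all_order all_algebra.
Set Implicit Arguments. Unset Strict Implicit. Unset Printing Implicit Defensive.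
Import Order.TTheory GRing.Theory Num.Theory.

Fixpoint all_seqs (len : nat) (vals : seq nat) : seq (seq nat) :=
  match len with
  | 0 => [:: [::]]
  | len'.+1 => flatten [seq [seq x :: s | s <- all_seqs len' vals] | x <- vals]
  end.

(* A finite superset of the partitions of n: all sequences of length <= n
   with entries in {1,...,n}. *)
Definition partition_candidates (n : nat) : seq (seq nat) :=
  flatten [seq all_seqs l (iota 1 n) | l <- iota 0 n.+1].

Definition is_partition (n : nat) (l : seq nat) : bool :=
  [&& sorted geq l, all (fun x => 0 < x) l & sumn l == n].

Definition partitions (n : nat) : seq (seq nat) :=
  undup [seq l <- partition_candidates n | is_partition n l].

Definition npart (n : nat) : nat := size (partitions n).

Definition npartz (z : int) : nat :=
  match z with Posz n => npart n | Negz _ => 0 end.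

(* mex_{A,a}(lambda): the smallest positive integer congruent to a mod A that
   is not a part of lambda.  Searched among 1..a + A*(size l + 1), which
   contains at least size l + 1 such integers (a, a+A, ..., a + A*size l)
   when A, a > 0, so the search always succeeds for positive A, a. *)
Definition mex (A a : nat) (l : seq nat) : nat :=
  head 0 [seq k <- iota 1 (a + A * (size l).+1) |
          (k %% A == a %% A) && (k \notin l)].

Definition p_mex (A a n : nat) : nat :=
  size [seq l <- partitions n | mex A a l %% (2 * A) == a %% (2 * A)].

(* Main.v *)
Require Import Defs.
From mathcomp Require Import all_boot all_order all_algebra zify.
Import Order.TTheory GRing.Theory Num.Theory.

Lemma mem_all_seqs (vals : seq nat) (s : seq nat) :
  all (fun x => x \in vals) s -> s \in all_seqs (size s) vals.
Proof.
elim: s => [|x s IH] /=; first by rewrite inE.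
move=> /andP[xv /IH sv].
exact: (allpairs_f (fun x s => x :: s) xv sv).
Qed.

Lemma size_le_sumn (l : seq nat) : all (fun x => 0 < x) l -> size l <= sumn l.
Proof. elim: l => //= x l IH /andP[x0 /IH]; lia. Qed.

Lemma mem_le_sumn {l : seq nat} {x} : x \in l -> x <= sumn l.
Proof.
elim: l => //= y l IH; rewrite inE => /orP[/eqP->|/IH]; lia.
Qed.

Lemma mem_partitions n l : (l \in partitions n) = is_partition n l.
Proof.
rewrite /partitions mem_undup mem_filter andb_idr // => /and3P[_ pos /eqP sn].
rewrite /partition_candidates; apply/flatten_mapP; exists (size l).
  by rewrite mem_iota -sn ltnS size_le_sumn.
apply: mem_all_seqs; apply/allP => x xl.
rewrite mem_iota -sn; have := mem_le_sumn xl; have := allP pos x xl; lia.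
Qed.

Lemma uniq_partitions n : uniq (partitions n).
Proof. exact: undup_uniq. Qed.

Lemma count_bij (T : eqType) (s1 s2 : seq T) (P1 P2 : pred T) f g :
  uniq s1 -> uniq s2 ->
  (forall x, x \in s1 -> P1 x -> [/\ f x \in s2, P2 (f x) & g (f x) = x]) ->
  (forall y, y \in s2 -> P2 y -> [/\ g y \in s1, P1 (g y) & f (g y) = y]) ->
  count P1 s1 = count P2 s2.
Proof.
move=> u1 u2 H1 H2; rewrite -!size_filter; apply/eqP; rewrite eqn_leq.
apply/andP; split.
  rewrite -(size_map f); apply: uniq_leq_size.
    rewrite map_inj_in_uniq ?filter_uniq // => x y.
    rewrite !mem_filter => /andP[px xs] /andP[py ys] e.
    by case: (H1 x xs px) => _ _ <-; case: (H1 y ys py) => _ _ <-; rewrite e.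
  move=> z /mapP[x]; rewrite mem_filter => /andP[px xs] ->.
  by case: (H1 x xs px) => a b _; rewrite mem_filter a b.
rewrite -(size_map g); apply: uniq_leq_size.
  rewrite map_inj_in_uniq ?filter_uniq // => x y.
  rewrite !mem_filter => /andP[px xs] /andP[py ys] e.
  by case: (H2 x xs px) => _ _ <-; case: (H2 y ys py) => _ _ <-; rewrite e.
move=> z /mapP[x]; rewrite mem_filter => /andP[px xs] ->.
by case: (H2 x xs px) => a b _; rewrite mem_filter a b.
Qed.

Lemma geq_trans : transitive geq.
Proof. move=> x y z; lia. Qed.
Lemma geq_anti : antisymmetric geq.
Proof. move=> x y; lia. Qed.
Lemma geq_total : total geq.
Proof. move=> x y; lia. Qed.

Lemma count_contain (D : seq nat) n :
  uniq D -> all (fun x => 0 < x) D ->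
  count (fun l => all (fun x => x \in l) D) (partitions n) =
  if sumn D <= n then npart (n - sumn D) else 0.
Proof.
elim: D n => [|d D IH] n /=.
  by move=> _ _; rewrite count_predT subn0.
move=> /andP[dD uD] /andP[d0 pD].
case: (leqP d n) => dn; last first.
  have -> : d + sumn D <= n = false by lia.
  apply/eqP; rewrite -leqn0 leqNgt -has_count; apply/hasP => -[l].
  rewrite mem_partitions => /and3P[_ _ /eqP sl] /andP[dl _].
  have := mem_le_sumn dl; lia.
have -> : count (fun l => (d \in l) && all (fun x => x \in l) D) (partitions n)
   = count (fun l => all (fun x => x \in l) D) (partitions (n - d)).
  apply: (@count_bij _ _ _ _ _ (rem d) (fun l => sort geq (d :: l)));
    try exact: uniq_partitions.
  - move=> l; rewrite mem_partitions => /and3P[so po /eqP sl] /andP[dl al].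
    have pr := perm_to_rem dl.
    have sr : sorted geq (rem d l) by apply: subseq_sorted (rem_subseq _ _) so; exact: geq_trans.
    split.
    + rewrite mem_partitions /is_partition sr /=.
      have -> : all (fun x => 0 < x) (rem d l) by apply/allP => x /mem_rem xl; exact: (allP po x xl).
      by rewrite (perm_sumn pr) /= in sl; apply/eqP; lia.
    + apply/allP => x xD; have xl := allP al x xD.
      rewrite (perm_mem pr) inE in xl.
      by case/orP: xl => // /eqP xd; move: xD; rewrite xd (negbTE dD).
    + apply: (sorted_eq geq_trans geq_anti) => //.
        exact: (sort_sorted geq_total).
      by rewrite perm_sort perm_sym.
  - move=> l; rewrite mem_partitions => /and3P[so po /eqP sl] al.
    have ps : perm_eq (sort geq (d :: l)) (d :: l) by rewrite perm_sort.
    have ss := sort_sorted geq_total (d :: l).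
    split.
    + rewrite mem_partitions /is_partition ss (perm_all _ ps) /= d0 po.
      by rewrite (perm_sumn ps) /=; apply/eqP; lia.
    + rewrite (perm_mem ps) inE eqxx /=; apply/allP => x xD.
      by rewrite (perm_mem ps) inE (allP al x xD) orbT.
    + apply: (sorted_eq geq_trans geq_anti) => //.
        by apply: subseq_sorted (rem_subseq _ _) ss; exact: geq_trans.
      have hd : d \in sort geq (d :: l) by rewrite (perm_mem ps) inE eqxx.
      have := perm_to_rem hd; rewrite (perm_sym) => h.
      have := perm_trans h ps; by rewrite perm_cons.
rewrite IH //; have -> : (sumn D <= n - d) = (d + sumn D <= n) by lia.
by case: ifP => // _; congr npart; lia.
Qed.

Section Main.
Variables (t m : nat).
Hypotheses (ht : 0 < t) (hm : 0 < m).

Definition aa (i : nat) := t + i * (m * t).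
Definition JJ (l : seq nat) := find (fun i => aa i \notin l) (iota 0 (size l).+1).

Lemma mt_gt0 : 0 < m * t. Proof. by rewrite muln_gt0 hm ht. Qed.

Lemma aa_inj : injective aa.
Proof.
move=> i j; rewrite /aa => /eqP; rewrite eqn_add2l eqn_pmul2r ?mt_gt0 //; exact/eqP.
Qed.

Lemma has_notin l : has (fun i => aa i \notin l) (iota 0 (size l).+1).
Proof.
apply/negPn/negP; rewrite -all_predC => /allP H.
have : size (map aa (iota 0 (size l).+1)) <= size l.
  apply: uniq_leq_size.
    by rewrite map_inj_uniq ?iota_uniq //; exact: aa_inj.
  by move=> x /mapP[i /H /= /negPn xi ->].
by rewrite size_map size_iota ltnn.
Qed.

Lemma JJ_le l : JJ l <= size l.
Proof. by have := has_notin l; rewrite has_find size_iota. Qed.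

Lemma JJ_notin l : aa (JJ l) \notin l.
Proof.
have h := JJ_le l; have := nth_find 0 (has_notin l).
rewrite nth_iota ?add0n //; rewrite /JJ in h; lia.
Qed.

Lemma JJ_ge j l : (j <= JJ l) = all (fun i => aa i \in l) (iota 0 j).
Proof.
apply/idP/allP.
  move=> jJ i; rewrite mem_iota add0n => /andP[_ ij].
  have iJ : i < JJ l by lia.
  have := before_find 0 iJ; rewrite nth_iota ?add0n.
    by move/negbT/negPn.
  by have := JJ_le l; lia.
move=> H; rewrite leqNgt; apply/negP => Jj.
have := JJ_notin l; rewrite H //  mem_iota; lia.
Qed.

Lemma head_filter_iota (P : pred nat) N x :
  1 <= x <= N -> P x -> (forall y, 1 <= y < x -> ~~ P y) ->
  head 0 (filter P (iota 1 N)) = x.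
Proof.
move=> /andP[x1 xN] Px Hy.
have -> : N = (x - 1) + (N - (x - 1)) by lia.
rewrite iotaD filter_cat.
have -> : [seq y <- iota 1 (x - 1) | P y] = [::].
  apply/eqP; rewrite -[_ == _]negbK -has_filter; apply/hasP => -[y].
  rewrite mem_iota => yr; have := Hy y; rewrite (negbTE (Hy y _)) //; lia.
have -> : N - (x - 1) = (N - x).+1 by lia.
by rewrite /= (_ : 1 + (x - 1) = x) ?Px //; lia.
Qed.

Lemma mex_JJ l : mex (m * t) t l = aa (JJ l).
Proof.
rewrite /mex; apply: head_filter_iota.
- rewrite /aa; apply/andP; split; first lia.
  rewrite leq_add2l mulnC leq_pmul2l ?mt_gt0 //; exact: leqW (JJ_le l).
- by rewrite JJ_notin andbT /aa addnC modnMDl.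
move=> y /andP[y1 yx]; apply/negP => /andP[/eqP ymod yl].
case: (ltnP y t) => yt.
  have : m * t %| t - y by rewrite -eqn_mod_dvd ?ymod // ltnW.
  move/dvdn_leq; have : m * t >= t by rewrite leq_pmull.
  lia.
have : m * t %| y - t by rewrite -eqn_mod_dvd ?ymod.
move/dvdnP => [i ei].
have ey : y = aa i by rewrite /aa -ei; lia.
have iJ : i < JJ l.
  move: yx; rewrite ey /aa ltn_add2l ltn_mul2r mt_gt0 //.
have := JJ_ge i.+1 l; rewrite iJ => /esym /allP /(_ i).
rewrite mem_iota -ey (negbTE yl) => H; suff : false by []; apply: H; lia.
Qed.

Lemma mex_even l :
  (mex (m * t) t l %% (2 * (m * t)) == t %% (2 * (m * t))) = ~~ odd (JJ l).
Proof.
rewrite mex_JJ /aa eqn_mod_dvd ?leq_addr // addKn dvdn_pmul2r ?mt_gt0 //.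
by rewrite dvdn2.
Qed.

End Main.

Section Alt.
Local Open Scope ring_scope.

Lemma alt_sum (J K : nat) :
  \sum_(0 <= j < K.+1) (-1) ^+ j * ((j <= J)%N : nat)%:Z
  = ((~~ odd (minn K J)) : nat)%:Z.
Proof.
elim: K => [|K IH]; first by rewrite big_nat1 expr0 mul1r leq0n min0n.
rewrite big_nat_recr //= IH.
case: (leqP K.+1 J) => h.
  have -> : minn K J = K by lia.
  rewrite -signr_odd /=.
  by case: (odd K) => /=; rewrite ?expr1 ?expr0.
have -> : minn K J = J by lia.
by rewrite mulr0 addr0.
Qed.

Lemma count_alt (T : eqType) (J : T -> nat) (K : nat) (s : seq T) :
  (forall l, l \in s -> (J l <= K)%N) ->
  (count (fun l => ~~ odd (J l)) s)%:Z =
  \sum_(0 <= j < K.+1) (-1) ^+ j * (count (fun l => (j <= J l)%N) s)%:Z.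
Proof.
elim: s => [|x s IH] H /=.
  by rewrite big1 // => j _; rewrite mulr0.
under eq_bigr do rewrite PoszD mulrDr.
rewrite big_split /= -IH; last by move=> l ls; apply: H; rewrite inE ls orbT.
rewrite PoszD alt_sum; have := H x (mem_head _ _) => h.
by have -> : minn K (J x) = J x by lia.
Qed.

Lemma split_sum (F : nat -> int) n :
  \sum_(0 <= j < (2 * n).+1) (-1) ^+ j * F j =
  F 0%N + \sum_(1 <= r < n.+1) F (2 * r)%N - \sum_(1 <= s < n.+1) F (2 * s - 1)%N.
Proof.
elim: n => [|n IH].
  by rewrite muln0 big_nat1 !big_geq // expr0 mul1r addr0 subr0.
have -> : (2 * n.+1).+1 = ((2 * n).+1).+2 by rewrite mulnS.
rewrite [in LHS]big_nat_recr // [in LHS]big_nat_recr //= IH.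
rewrite (big_nat_recr n.+1) // (big_nat_recr n.+1) //.
set A := \big[_/_]_(1 <= i < n.+1) F (2 * i)%N.
set B := \big[_/_]_(1 <= i < n.+1) F (2 * i - 1)%N.
have -> : (2 * n.+1 - 1 = (2 * n).+1)%N by lia.
have -> : (2 * n.+1 = (2 * n).+2)%N by lia.
have -> : (-1) ^+ (2 * n).+1 = -1 :> int by rewrite -signr_odd /= oddM.
have -> : (-1) ^+ (2 * n).+2 = 1 :> int by rewrite -signr_odd /= oddM.
rewrite mul1r mulN1r /=.
lia.
Qed.

End Alt.

Lemma npartz_sub (n S : nat) :
  npartz (n%:Z - S%:Z)%R = if S <= n then npart (n - S) else 0.
Proof.
case: leqP => h; first by rewrite subzn.
case E: (n%:Z - S%:Z)%R => [k|k] //.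
have : (n%:Z = S%:Z + k%:Z)%R by rewrite -E addrC subrK.
rewrite -PoszD => -[]; lia.
Qed.

Definition SS t m j := sumn (map (aa t m) (iota 0 j)).

Lemma SS_closed t m j : 2 * SS t m j = 2 * j * t + m * t * j * (j - 1).
Proof.
elim: j => [|j IH]; first by rewrite /SS /= !muln0 mul0n.
rewrite /SS; have -> : iota 0 j.+1 = iota 0 j ++ [:: j] by rewrite -addn1 iotaD.
rewrite map_cat sumn_cat /= -/(SS t m j) mulnDr IH /aa.
case: j {IH} => [|j]; first by rewrite !muln0 ?mul0n; lia.
have -> : (j.+2 - 1 = j.+1)%N by lia.
have -> : (j.+1 - 1 = j)%N by lia.
nia.
Qed.

Lemma SS_even t m r : 0 < r -> SS t m (2 * r) = t * r * (2 * r * m - m + 2).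
Proof.
move: (SS_closed t m (2 * r)); move: (SS t m (2 * r)) => S.
case: r => [|r] // H _.
move: H.
have -> : (2 * r.+1 * m - m = 2 * r * m + m)%N by rewrite mulnS mulnDl; lia.
have -> : (2 * r.+1 - 1 = 2 * r + 1)%N by lia.
nia.
Qed.

Lemma SS_odd t m s : 0 < s -> SS t m (2 * s - 1) = t * (2 * s - 1) * (s * m - m + 1).
Proof.
move: (SS_closed t m (2 * s - 1)); move: (SS t m (2 * s - 1)) => S.
case: s => [|s] // H _.
move: H.
have -> : (2 * s.+1 - 1 = 2 * s + 1)%N by lia.
have -> : (2 * s + 1 - 1 = 2 * s)%N by lia.
have -> : (s.+1 * m - m = s * m)%N by rewrite mulSn; lia.
nia.
Qed.

Local Open Scope ring_scope.

Theorem theorem3p1 (t m : nat) (ht : (0 < t)%N) (hm : (0 < m)%N) (n : nat) :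
  (p_mex (m * t) t n)%:Z =
    (npart n)%:Z
    + \sum_(1 <= r < n.+1) (npartz (n%:Z - (t * r * (2 * r * m - m + 2))%N%:Z))%:Z
    - \sum_(1 <= s < n.+1) (npartz (n%:Z - (t * (2 * s - 1) * (s * m - m + 1))%N%:Z))%:Z.
Proof.
have -> : p_mex (m * t) t n = count (fun l => ~~ odd (JJ t m l)) (partitions n).
  rewrite /p_mex size_filter; apply: eq_count => l; exact: mex_even t m ht hm l.
rewrite (@count_alt _ (JJ t m) (2 * n)); last first.
  move=> l; rewrite mem_partitions => /and3P[_ po /eqP sl].
  have := JJ_le t m ht hm l; have := size_le_sumn l po; lia.
have E : forall j, (count (fun l => (j <= JJ t m l)%N) (partitions n))%:Z
                 = (npartz (n%:Z - (SS t m j)%:Z))%:Z.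
  move=> j; rewrite npartz_sub -count_contain.
  - congr (Posz _); apply: eq_count => l; by rewrite (JJ_ge t m ht hm) all_map.
  - by rewrite (map_inj_uniq (aa_inj t m ht hm)) iota_uniq.
  - by apply/allP => x /mapP[i _ ->]; rewrite /aa; lia.
under eq_bigr do rewrite E.
rewrite split_sum (_ : SS t m 0 = 0%N) // subr0.
congr (_ + _ - _).
  apply: eq_big_nat => i /andP[i1 _].
  by rewrite SS_even.
apply: eq_big_nat => i /andP[i1 _].
by rewrite SS_odd.
Qed.
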